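(* There exist constants $c>0$ and $b>1$ such that for every even $n\ge 2$ there exist a zero-one knapsack instance with $n$ items (positive integer weights $w_i$, integer profits $v_i$) and a capacity $W$ such that the number of optimal solutions with capacity $W$ is at least $c\,b^n$ (i.e. exponential in $n$), whereas with capacity $W'=W+1$ the instance has exactly one optimal solution.
   Context: For a zero-one knapsack instance with items $[n]=\{1,\dots,n\}$ and capacity $W$, for $s\subseteq[n]$ let $w(s)=\sum_{i\in s}w_i$ and $v(s)=\sum_{i\in s}v_i$. The feasible solutions are $\mathcal{S}=\{s\subseteq[n]: w(s)\le W\}$, and the optimal solutions are $\mathcal{S}^*=\{s\in\mathcal{S}: v(s)=\max_{t\in\mathcal{S}}v(t)\}$. *)

(* Defs.v *)
From mathcomp Require Import all_boot.
From mathcomp Require Import all_algebra.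
Set Implicit Arguments. Unset Strict Implicit. Unset Printing Implicit Defensive.
Import GRing.Theory Num.Theory.

(* Zero-one knapsack over items 'I_n (= {1..n} shifted to {0..n-1}). *)
Definition weight n (w : 'I_n -> nat) (s : {set 'I_n}) : nat := \sum_(i in s) w i.
Definition profit n (v : 'I_n -> int) (s : {set 'I_n}) : int := (\sum_(i in s) v i)%R.

Definition feasible n (w : 'I_n -> nat) (W : nat) : {set {set 'I_n}} :=
  [set s | weight w s <= W].

Definition optimal n (w : 'I_n -> nat) (v : 'I_n -> int) (W : nat)
  : {set {set 'I_n}} :=
  [set s in feasible w W | [forall t in feasible w W, (profit v t <= profit v s)%R]].

(* Main.v *)
Require Import Defs.
From mathcomp Require Import all_boot all_algebra.
From Stdlib Require Import Reals Lra.

Section Aux.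
Import GRing.Theory Num.Theory.
Variable n' : nat.
Local Notation n := n'.+1.
Definition ww (i : 'I_n) : nat := if i == ord0 then n else 1.
Definition vv (i : 'I_n) : int := if i == ord0 then Posz 1 else Posz 0.

Lemma weight_ww (s : {set 'I_n}) :
  (weight ww s = (ord0 \in s) * n + #|s :\ ord0|)%N.
Proof.
have H : forall t : {set 'I_n}, ord0 \notin t -> weight ww t = #|t|.
  move=> t Ht; rewrite /weight -sum1_card; apply: eq_bigr => i it.
  by rewrite /ww; case: eqP => // e; rewrite -e it in Ht.
case: (boolP (ord0 \in s)) => h.
  rewrite /weight (big_setD1 _ h) -/(weight ww _) H ?setD11 //.
  by rewrite /ww eqxx mul1n.
by rewrite H // mul0n add0n; apply: eq_card => i; rewrite !inE;
  case: eqP => // ->; rewrite (negbTE h).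
Qed.

Lemma profit_vv (s : {set 'I_n}) : profit vv s = Posz (ord0 \in s).
Proof.
have H : forall t : {set 'I_n}, ord0 \notin t -> profit vv t = Posz 0.
  move=> t Ht; rewrite /profit big1 // => i it.
  by rewrite /vv; case: eqP => // e; rewrite -e it in Ht.
case: (boolP (ord0 \in s)) => h.
  rewrite /profit (big_setD1 _ h) -/(profit vv _) H ?setD11 //.
by rewrite H.
Qed.

Lemma card_small (s : {set 'I_n}) : (#|s :\ ord0| <= n')%N.
Proof.
have : s :\ ord0 \subset [set~ ord0] by apply/subsetP=> i; rewrite !inE => /andP[].
by move/subset_leq_card; rewrite cardsC1 card_ord.
Qed.

Definition liftS (A : {set 'I_n'}) : {set 'I_n} := [set lift ord0 x | x in A].

Lemma opt_big : [set liftS A | A in powerset [set: 'I_n']]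
   \subset optimal ww vv n'.
Proof.
apply/subsetP=> s /imsetP[A _ ->].
have h0 : ord0 \notin liftS A.
  by apply/imsetP=> -[x _ e]; move: (neq_lift ord0 x); rewrite -e eqxx.
have feas : forall t : {set 'I_n}, (t \in feasible ww n') = (ord0 \notin t).
  move=> t; rewrite inE weight_ww; case: (ord0 \in t) => /=.
    by rewrite mul1n; apply/negbTE; rewrite -ltnNge; exact: leq_addr.
  by rewrite mul0n add0n card_small.
rewrite inE feas h0 /=; apply/forallP=> t; apply/implyP; rewrite feas => ht.
by rewrite !profit_vv (negbTE ht) (negbTE h0).
Qed.

Lemma opt_one : optimal ww vv n = [set [set ord0]].
Proof.
apply/setP=> s; rewrite !inE weight_ww.
apply/andP/eqP.
  move=> [hw /forallP /(_ [set ord0])]; rewrite inE weight_ww set11 mul1n setDv cards0 addn0 leqnn /=.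
  rewrite !profit_vv set11; case: (boolP (ord0 \in s)) => h; last by [].
  move=> _; move: hw; rewrite h mul1n -[X in _ <= X]addn0 leq_add2l leqn0 cards_eq0 => /eqP e.
  apply/setP=> i; rewrite inE; case: eqP => [->//|/eqP ne].
  apply/negbTE/negP=> hi; have : i \in s :\ ord0 by rewrite !inE ne hi.
  by rewrite e inE.
move=> ->; rewrite set11 mul1n setDv cards0 addn0 leqnn /=.
split => //; apply/forallP=> t; apply/implyP=> _; rewrite !profit_vv set11.
by case: (ord0 \in t).
Qed.
End Aux.

Lemma INR_exp2 k : INR (expn 2 k) = (2 ^ k)%R.
Proof.
elim: k => [|k IH]; first by [].
by rewrite expnS mult_INR IH /=.
Qed.

Theorem theorem4 :
  exists (c b : R), (0 < c)%R /\ (1 < b)%R /\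
  forall n : nat, 2 <= n -> ~~ odd n ->
    exists (w : 'I_n -> nat) (v : 'I_n -> int) (W : nat),
      (forall i, 0 < w i) /\
      (c * b ^ n <= INR #|optimal w v W|)%R /\
      #|optimal w v W.+1| = 1.
Proof.
exists (/2)%R, 2%R; split; first lra.
split; first lra.
case=> [//|n'] _ _.
exists (@ww n'), (@vv n'), n'; split.
  by move=> i; rewrite /ww; case: eqP.
split; last by rewrite opt_one cards1.
have hc : (expn 2 n' <= #|optimal (@ww n') (@vv n') n'|)%N.
  apply: leq_trans (subset_leq_card (opt_big n')).
  rewrite card_imset; last exact: (imset_inj (@lift_inj _ ord0)).
  by rewrite card_powerset cardsT card_ord.
apply: Rle_trans (le_INR _ _ (ssrnat.leP hc)).
rewrite INR_exp2 /=; lra.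
Qed.
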